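(* Let $\mathcal{T}$ be a locally compact, $\sigma$-compact Hausdorff space, $\mu$ a finite positive Radon measure on $\mathcal{T}$ with $\mu(\mathcal{T})>0$, $1\le p<\infty$ with conjugate $q$, and $\varepsilon>1$. Let $S_\varepsilon^p=\{f\in L^q_\mu(\mathcal{T})\text{ real}:\|f\|_q\le\varepsilon,\ \int f\,d\mu=\mu(\mathcal{T})^{1/p}\}$ and $L^p(\mathcal{T})_\varepsilon^+=\{g\in L^p_\mu(\mathcal{T})\text{ real}:\int gf\,d\mu\ge0\ \forall f\in S_\varepsilon^p\}$. Then $L^p(\mathcal{T})_+\subseteq L^p(\mathcal{T})_\varepsilon^+$ if and only if $S_\varepsilon^p\subseteq L^q(\mathcal{T})_+$, where $L^s(\mathcal{T})_+$ denotes the $\mu$-a.e. nonnegative functions in $L^s_\mu(\mathcal{T})$. *)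

(* Defs.v *)
From HB Require Import structures.
From mathcomp Require Import all_boot all_order all_algebra.
From mathcomp Require Import all_classical all_reals all_analysis.
Set Implicit Arguments. Unset Strict Implicit. Unset Printing Implicit Defensive.
Import Order.TTheory GRing.Theory Num.Theory.
Import numFieldNormedType.Exports.
Local Open Scope classical_set_scope.
Local Open Scope ring_scope.

Definition borel (T : ptopologicalType) := g_sigma_algebraType (@open T).

Definition sigma_compact_space (T : ptopologicalType) : Prop :=
  exists K : nat -> set T, (forall n, compact (K n)) /\ \bigcup_n K n = setT.

Definition radon_measure (T : ptopologicalType) (R : realType)
    (mu : {measure set (borel T) -> \bar R}) : Prop :=
  [/\ (forall K : set T, compact K -> (mu K < +oo)%E),
      (forall E : set (borel T), measurable E ->
          mu E = ereal_inf [set mu U | U in [set U : set T | open U /\ E `<=` U]])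
    & (forall U : set T, open U ->
          mu U = ereal_sup [set mu K | K in [set K : set T | compact K /\ K `<=` U]])].

(* Real-valued (representatives of elements of) L^p_mu, p an extended real. *)
Definition Lmem (T : ptopologicalType) (R : realType)
    (mu : {measure set (borel T) -> \bar R}) (p : \bar R) (f : borel T -> R) : Prop :=
  measurable_fun setT f /\ finite_norm mu p f.

Definition Lplus (T : ptopologicalType) (R : realType)
    (mu : {measure set (borel T) -> \bar R}) (p : \bar R) : set (borel T -> R) :=
  [set f | Lmem mu p f /\ {ae mu, forall x, 0 <= f x}].

Definition S_eps (T : ptopologicalType) (R : realType)
    (mu : {measure set (borel T) -> \bar R}) (p eps : R) : set (borel T -> R) :=
  [set f | Lmem mu (hoelder_conjugate p%:E) f
           /\ ('N[mu]_(hoelder_conjugate p%:E)[EFin \o f] <= eps%:E)%E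
           /\ (\int[mu]_x (f x)%:E = mu [set: borel T] `^ p^-1)%E].

Definition Lp_eps_plus (T : ptopologicalType) (R : realType)
    (mu : {measure set (borel T) -> \bar R}) (p eps : R) : set (borel T -> R) :=
  [set g | Lmem mu p%:E g
           /\ forall f, S_eps mu p eps f -> (0 <= \int[mu]_x (g x * f x)%:E)%E].

(* Main.v *)
Require Import Defs.
From HB Require Import structures.
From mathcomp Require Import all_boot all_order all_algebra.
From mathcomp Require Import all_classical all_reals all_analysis.
From mathcomp Require Import measurable_realfun.
Import Order.TTheory GRing.Theory Num.Theory.
Local Open Scope classical_set_scope.
Local Open Scope ring_scope.

Lemma ae_ge0_integral_ge0 d (X : measurableType d) (R : realType)
  (mu : {measure set X -> \bar R}) (h : X -> R) :
  measurable_fun setT h -> {ae mu, forall x, 0 <= h x} ->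
  (0 <= \int[mu]_x (h x)%:E)%E.
Proof.
move=> mh hae.
have mh' : measurable_fun [set: X] (fun x => (h x)%:E) by exact: measurableT_comp.
rewrite integralE.
have -> : (\int[mu]_x (fun x => (h x)%:E)^\- x = 0)%E.
  rewrite (ae_eq_integral (cst 0%E)) ?integral0//.
  - exact: measurable_funeneg.
  - apply: filterS hae => x hx _.
    by rewrite funenegE /=; apply/max_idPr; rewrite lee_fin oppr_le0.
by rewrite sube0 integral_ge0 // => x _; exact: funepos_ge0.
Qed.

Theorem lemma5p3 (T : ptopologicalType) (R : realType)
  (mu : {measure set (borel T) -> \bar R}) (p eps : R) :
  locally_compact [set: T] -> sigma_compact_space T -> hausdorff_space T ->
  radon_measure mu -> (mu [set: borel T] < +oo)%E -> (0 < mu [set: borel T])%E ->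
  1 <= p -> 1 < eps ->
  (Lplus mu p%:E `<=` Lp_eps_plus mu p eps <->
   S_eps mu p eps `<=` Lplus mu (hoelder_conjugate p%:E)).
Proof.
move=> _ _ _ _ mufin mupos p1 _; split.
- move=> H f Sf; split; first exact: Sf.1.
  have mf : measurable_fun setT f by case: Sf => -[].
  pose A := f @^-1` `]-oo, 0[.
  have mA : measurable A.
    by rewrite -[A]setTI; apply: mf => //; exact: measurable_itv.
  pose g : borel T -> R := \1_A.
  have mg : measurable_fun setT g by exact: measurable_indic.
  have gL : Lplus mu p%:E g.
    split; last by apply: aeW => x; rewrite /g indicE.
    split => //; rewrite /finite_norm unlock /Lnorm.
    apply: poweR_lty.
    have p0 : p != 0 by rewrite gt_eqF // (lt_le_trans ltr01 p1).
    rewrite (eq_integral (fun x => (\1_A x)%:E)); last first.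
      move=> x _ /=; rewrite /g indicE; case: (x \in A) => /=.
        by rewrite normr1 powR1.
      by rewrite normr0 powR0.
    have := @integral_indic _ _ R mu setT measurableT A mA. move=> ->. rewrite setIT.
    by apply: le_lt_trans mufin; apply: le_measure => //; rewrite inE.
  have H0 := (H g gL).2 f Sf.
  pose h x := ((g x * f x)%:E : \bar R).
  have mh : measurable_fun setT h.
    by apply: measurableT_comp => //; exact: measurable_funM.
  have hle0 : forall x, (h x <= 0)%E.
    move=> x; rewrite /h /g indicE lee_fin.
    case: (boolP (x \in A)) => xA /=; last by rewrite mul0r.
    rewrite mul1r; move: xA; rewrite inE /A /= in_itv /=; exact: ltW.
  have habs : (\int[mu]_x `|h x| = 0)%E.
    move: H0; rewrite integralE.
    have -> : (\int[mu]_x (fun x => (g x * f x)%:E)^\+ x = 0)%E.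
      rewrite (eq_integral (cst 0%E)) ?integral0 // => x _.
      by apply: (le0_funeposE (D:=setT)); [move=> y _; exact: hle0|rewrite inE].
    have -> : (\int[mu]_x (fun x => (g x * f x)%:E)^\- x = \int[mu]_x `|h x|)%E.
      apply: eq_integral => x _.
      rewrite (le0_funenegE (D:=setT)) /=; [|by move=> y _; exact: hle0|by rewrite inE].
      by rewrite ler0_norm //; rewrite -lee_fin; exact: hle0.
    rewrite add0e oppe_ge0 => H1.
    by apply/eqP; rewrite eq_le H1 integral_ge0.
  have := (ae_eq_integral_abs mu measurableT mh).1 habs.
  apply: filterS => x /(_ I) hx0.
  rewrite leNgt; apply/negP => fx0.
  have xA : x \in A by rewrite inE /A /= in_itv /= fx0.
  move: hx0; rewrite /h /g indicE xA mul1r /= => -[] /eqP.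
  by rewrite lt_eqF.
- move=> H g [gL gae]; split => // f Sf.
  have mf : measurable_fun setT f by case: Sf => -[].
  have mg : measurable_fun setT g by case: gL.
  apply: ae_ge0_integral_ge0; first exact: measurable_funM.
  have [_ fae] := H f Sf.
  apply: filterS2 gae fae => x gx fx; exact: mulr_ge0.
Qed.
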